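(* For any pair of probability distributions $P,Q$ on a common countable set, $$C(P,Q)\ \ge\ -\tfrac12\log\!\left(1-\big(d_{\mathrm{TV}}(P,Q)\big)^2\right),$$ and for each value $\varepsilon\in[0,1)$ of $d_{\mathrm{TV}}(P,Q)$ there exist $P,Q$ with $d_{\mathrm{TV}}(P,Q)=\varepsilon$ attaining equality.
   Context: $d_{\mathrm{TV}}(P,Q)=\frac12\sum_x |P(x)-Q(x)|$; the Chernoff information is $C(P,Q)=-\min_{\lambda\in[0,1]}\log\left(\sum_x P(x)^{\lambda}Q(x)^{1-\lambda}\right)$ (with $\log 0=-\infty$; the right-hand side is $+\infty$ when $d_{\mathrm{TV}}=1$). Logarithms are natural. *)

(* Defs.v *)
From Stdlib Require Import Reals.
Open Scope R_scope.

(* The common countable set is represented by nat (every countable set,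
   finite or infinite, embeds into nat; pad with zero mass). *)

Definition is_distr (P : nat -> R) : Prop :=
  (forall x, 0 <= P x) /\ infinite_sum P 1.

Definition is_tv (P Q : nat -> R) (d : R) : Prop :=
  exists t, infinite_sum (fun x => Rabs (P x - Q x)) t /\ d = t / 2.

(* Real power x^y for x >= 0, with the convention 0^y = 0 for all y
   (i.e. the Chernoff sum ranges over the common support of the factors). *)
Definition pw (x y : R) : R :=
  if Rle_dec x 0 then 0 else Rpower x y.

Definition is_bsum (P Q : nat -> R) (lam b : R) : Prop :=
  infinite_sum (fun x => pw (P x) lam * pw (Q x) (1 - lam)) b.

Inductive ER : Type := Fin (r : R) | PInf.

Definition ER_le (a b : ER) : Prop :=
  match a, b with
  | Fin x, Fin y => x <= y
  | _, PInf => True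
  | PInf, Fin _ => False
  end.

Definition ER_scale (c : R) (a : ER) : ER :=
  match a with Fin x => Fin (c * x) | PInf => PInf end.

(* -log x, with log 0 = -infinity (arguments here are >= 0). *)
Definition neglog (x : R) : ER :=
  if Rle_dec x 0 then PInf else Fin (- ln x).

(* c is the Chernoff information
   C(P,Q) = - min_{lam in [0,1]} log (sum_x P(x)^lam Q(x)^(1-lam)),
   i.e. m is the minimum over [0,1] of the sum and c = -log m. *)
Definition is_chernoff (P Q : nat -> R) (c : ER) : Prop :=
  exists m,
    (exists lam, 0 <= lam <= 1 /\ is_bsum P Q lam m) /\
    (forall lam b, 0 <= lam <= 1 -> is_bsum P Q lam b -> m <= b) /\
    c = neglog m.

Definition tv_bound (d : R) : ER := ER_scale (1/2) (neglog (1 - d^2)).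

(* Main.v *)
Require Import Defs.
From Stdlib Require Import Reals Lra Psatz.
Open Scope R_scope.

Lemma cont_intro f x0 : (forall eps, 0<eps -> exists d, 0<d /\ forall x, Rabs (x - x0) < d -> Rabs (f x - f x0) < eps) -> continuity_pt f x0.
Proof.
  intros H eps Heps. destruct (H eps Heps) as [d [Hd Hx]]. exists d; split; [lra|].
  intros x [_ Hdx]. apply Hx. exact Hdx.
Qed.

Lemma cont_elim f x0 : continuity_pt f x0 -> forall eps, 0<eps -> exists d, 0<d /\ forall x, Rabs (x - x0) < d -> Rabs (f x - f x0) < eps.
Proof.
  intros H eps Heps. destruct (H eps Heps) as [d [Hd Hx]]. exists d; split; [lra|].
  intros x Hdx. destruct (Req_dec x x0) as [->|Hne].
  - unfold Rminus; rewrite Rplus_opp_r, Rabs_R0; lra.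
  - apply (Hx x). split; [split; [exact I| congruence] | exact Hdx].
Qed.

Definition clamp (l : R) := Rmax 0 (Rmin 1 l).

Lemma clamp_lip x y : Rabs (clamp x - clamp y) <= Rabs (x - y).
Proof. unfold clamp, Rmax, Rmin.
  repeat destruct Rle_dec; split_Rabs; lra. Qed.

Lemma clamp_range l : 0 <= clamp l <= 1.
Proof. unfold clamp, Rmax, Rmin. repeat destruct Rle_dec; lra. Qed.

Lemma clamp_id l : 0 <= l <= 1 -> clamp l = l.
Proof. intros. unfold clamp, Rmax, Rmin. repeat destruct Rle_dec; lra. Qed.

Lemma clamp_cont x0 : continuity_pt clamp x0.
Proof. apply cont_intro. intros eps He. exists eps; split; [lra|].
  intros x Hx. eapply Rle_lt_trans; [apply clamp_lip| exact Hx]. Qed.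

Lemma onem_clamp_cont x0 : continuity_pt (fun l => 1 - clamp l) x0.
Proof. apply cont_intro. intros eps He. exists eps; split; [lra|].
  intros x Hx. eapply Rle_lt_trans; [|exact Hx].
  replace (1 - clamp x - (1 - clamp x0)) with (-(clamp x - clamp x0)) by ring.
  rewrite Rabs_Ropp. apply clamp_lip. Qed.


Lemma pw_cont p h x0 : continuity_pt h x0 -> continuity_pt (fun l => pw p (h l)) x0.
Proof.
  intros Hh. unfold pw. destruct (Rle_dec p 0).
  - apply continuity_pt_const. intros a b; reflexivity.
  - unfold Rpower.
    apply (continuity_pt_comp (fun l => h l * ln p) exp).
    + apply (continuity_pt_mult h (fun _ => ln p)); [exact Hh|].
      apply continuity_pt_const. intros a b; reflexivity.
    + apply derivable_continuous_pt, derivable_pt_exp.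
Qed.

Lemma tail_bound (g Sm : nat -> R) G s N :
  (forall x, 0 <= g x <= Sm x) -> infinite_sum g G -> infinite_sum Sm s ->
  0 <= G - sum_f_R0 g N <= s - sum_f_R0 Sm N.
Proof.
  intros Hb Hg HS. split.
  - assert (sum_f_R0 g N <= G); [|lra].
    apply (growing_ineq (fun n => sum_f_R0 g n)); [|exact Hg].
    intro n. simpl. specialize (Hb (S n)). lra.
  - pose (D := fun M => sum_f_R0 Sm M - sum_f_R0 g M).
    assert (HD : Un_cv D (s - G)) by (apply CV_minus; assumption).
    assert (D N <= s - G); [|unfold D in *; lra].
    apply (growing_ineq D); [|exact HD].
    intro n. unfold D. simpl. specialize (Hb (S n)). lra.
Qed.

Lemma fsum_cont (F : R -> nat -> R) l0 :
  (forall x, continuity_pt (fun l => F l x) l0) ->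
  forall N, continuity_pt (fun l => sum_f_R0 (F l) N) l0.
Proof.
  intros H N. induction N.
  - simpl. apply H.
  - simpl. apply (continuity_pt_plus (fun l => sum_f_R0 (F l) N) (fun l => F l (S N))); auto.
Qed.

Lemma series_cont (F : R -> nat -> R) (Sm : nat -> R) (s : R) (B : R -> R) l0 :
 (forall l x, 0 <= F l x <= Sm x) -> infinite_sum Sm s ->
 (forall x, continuity_pt (fun l => F l x) l0) ->
 (forall l, infinite_sum (F l) (B l)) -> continuity_pt B l0.
Proof.
  intros Hb HS Hc HB. apply cont_intro. intros eps He.
  destruct (HS (eps/4)) as [N HN]; [lra|].
  specialize (HN N (le_n N)). unfold R_dist in HN.
  destruct (cont_elim _ _ (fsum_cont F l0 Hc N) (eps/2)) as [d [Hd Hx]]; [lra|].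
  exists d; split; [exact Hd|]. intros x Hxd. specialize (Hx x Hxd).
  pose proof (tail_bound (F x) Sm (B x) s N (Hb x) (HB x) HS).
  pose proof (tail_bound (F l0) Sm (B l0) s N (Hb l0) (HB l0) HS).
  revert Hx HN H H0. split_Rabs; lra.
Qed.

Lemma cv_const c : Un_cv (fun _ => c) c.
Proof. intros e He. exists 0%nat. intros. unfold R_dist. rewrite Rminus_diag, Rabs_R0. lra. Qed.

Lemma cv_ext u v l : (forall n, u n = v n) -> Un_cv u l -> Un_cv v l.
Proof. intros Heq H e He. destruct (H e He) as [N HN]. exists N. intros n Hn. rewrite <- Heq. auto. Qed.

Lemma isum_ext f g l : (forall x, f x = g x) -> infinite_sum f l -> infinite_sum g l.
Proof. intros Heq H. unfold infinite_sum in *. apply (cv_ext (fun n => sum_f_R0 f n)); auto.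
  intro n. apply sum_eq. auto. Qed.

Lemma isum_lin f g A Bv c1 c2 : infinite_sum f A -> infinite_sum g Bv ->
  infinite_sum (fun x => c1 * f x + c2 * g x) (c1*A + c2*Bv).
Proof.
  intros Hf Hg. unfold infinite_sum in *.
  apply (cv_ext (fun n => c1 * sum_f_R0 f n + c2 * sum_f_R0 g n)).
  - intro n. induction n; simpl; [ring|]. rewrite <- IHn. ring.
  - apply CV_plus; apply CV_mult; auto; apply cv_const.
Qed.

Lemma isum_le f g A Bv : (forall x, f x <= g x) -> infinite_sum f A -> infinite_sum g Bv -> A <= Bv.
Proof. intros H Hf Hg. apply (@Rle_cv_lim (fun n => sum_f_R0 f n) (fun n => sum_f_R0 g n)); auto.
  intro n. apply sum_Rle. auto. Qed.

Lemma isum_nonneg f A : (forall x, 0 <= f x) -> infinite_sum f A -> 0 <= A.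
Proof. intros H Hf. apply (@Rle_cv_lim (fun _ => 0) (fun n => sum_f_R0 f n)); [|apply cv_const|exact Hf].
  intro n. apply cond_pos_sum. exact H. Qed.

Lemma pw_nonneg p y : 0 <= pw p y.
Proof. unfold pw. destruct Rle_dec; [lra|]. unfold Rpower. left; apply exp_pos. Qed.

Lemma bound_term p q lam : 0 <= p -> 0 <= q -> 0 <= lam <= 1 ->
  0 <= pw p lam * pw q (1-lam) <= p + q.
Proof.
  intros Hp Hq Hl. split. { apply Rmult_le_pos; apply pw_nonneg. }
  unfold pw. destruct (Rle_dec p 0); [lra|]. destruct (Rle_dec q 0); [lra|].
  apply Rle_trans with (Rpower (Rmax p q) lam * Rpower (Rmax p q) (1 - lam)).
  - apply Rmult_le_compat.
    + unfold Rpower; left; apply exp_pos.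
    + unfold Rpower; left; apply exp_pos.
    + apply Rle_Rpower_l; [lra|]. split; [lra| apply Rmax_l].
    + apply Rle_Rpower_l; [lra|]. split; [lra| apply Rmax_r].
  - rewrite <- Rpower_plus. replace (lam + (1 - lam)) with 1 by ring.
    rewrite Rpower_1. { unfold Rmax; destruct Rle_dec; lra. }
    unfold Rmax; destruct Rle_dec; lra.
Qed.

Lemma pw_half p : 0 <= p -> pw p (1/2) = sqrt p.
Proof. intros Hp. unfold pw. destruct Rle_dec.
  - replace p with 0 by lra. rewrite sqrt_0; reflexivity.
  - replace (1/2) with (/2) by field. apply Rpower_sqrt. lra. Qed.

Lemma key_ineq p q tt : 0 <= p -> 0 <= q -> 0 < tt ->
  Rabs (p - q) <= ((tt + /tt)/2) * (p + q) + (/tt - tt) * (sqrt p * sqrt q).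
Proof.
  intros Hp Hq Ht.
  pose proof (sqrt_sqrt p Hp). pose proof (sqrt_sqrt q Hq).
  pose proof (sqrt_positivity p Hp). pose proof (sqrt_positivity q Hq).
  set (a := sqrt p) in *. set (b := sqrt q) in *.
  rewrite <- H, <- H0.
  replace (a*a - b*b) with ((a-b)*(a+b)) by ring.
  rewrite Rabs_mult, (Rabs_pos_eq (a+b)) by lra.
  set (u := Rabs (a-b)). assert (Hu : u*u = (a-b)*(a-b)). { unfold u. rewrite <- Rabs_mult. apply Rabs_pos_eq. apply Rle_0_sqr. }
  assert (Hs: tt * /tt = 1) by (field; lra). set (s := /tt) in *.
  assert (0 < s) by (unfold s; apply Rinv_0_lt_compat; lra).
  assert (Hsq : 0 <= (tt*u - (a+b)) * (tt*u - (a+b))) by apply Rle_0_sqr.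
  apply (Rmult_le_reg_r tt); [exact Ht|].
  replace (((tt + s)/2 * (a*a+b*b) + (s - tt) * (a*b))*tt) with ((tt*tt*((a-b)*(a-b)) + (a+b)*(a+b)*(tt*s))/2) by field.
  rewrite Hs. rewrite <- Hu. nra.
Qed.

Lemma tv_alg d BC : 0 <= d -> 0 <= BC <= 1 ->
  (forall tt, 0 < tt -> 2*d <= tt*(1-BC) + (1+BC)/tt) -> d^2 <= 1 - BC^2.
Proof.
  intros Hd HB K. destruct (Req_dec d 0) as [->|Hd0]; [nra|].
  destruct (Req_dec BC 1) as [->|Ha].
  - exfalso. specialize (K ((1+1)/d)). 
    assert (0 < (1+1)/d) by (apply Rdiv_lt_0_compat; lra).
    specialize (K H). replace ((1 + 1) / ((1 + 1) / d)) with d in K by (field; lra). lra.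
  - specialize (K (d/(1-BC))).
    assert (0 < d/(1-BC)) by (apply Rdiv_lt_0_compat; lra).
    specialize (K H). replace (d / (1 - BC) * (1 - BC)) with d in K by (field; lra).
    replace ((1 + BC) / (d / (1 - BC))) with ((1+BC)*(1-BC)/d) in K by (field; lra).
    assert (d <= (1+BC)*(1-BC)/d) by lra.
    apply (Rmult_le_compat_r d) in H0; [|lra].
    replace ((1 + BC) * (1 - BC) / d * d) with ((1+BC)*(1-BC)) in H0 by (field; lra). nra.
Qed.

Lemma part1 : forall (P Q : nat -> R) (d : R),
      is_distr P -> is_distr Q -> is_tv P Q d ->
      exists c, is_chernoff P Q c /\ ER_le (tv_bound d) c.
Proof.
  intros P Q d [HP0 HP1] [HQ0 HQ1] [t [Ht Hd]].
  pose (F := fun l x => pw (P x) (clamp l) * pw (Q x) (1 - clamp l)).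
  pose (Sm := fun x => P x + Q x).
  assert (HSm : infinite_sum Sm 2).
  { pose proof (isum_lin P Q 1 1 1 1 HP1 HQ1).
    replace 2 with (1*1+1*1) by ring. refine (isum_ext _ _ _ _ H).
    intro x; unfold Sm; ring. }
  assert (Hb : forall l x, 0 <= F l x <= Sm x).
  { intros l x. apply bound_term; auto. apply clamp_range. }
  pose (B := fun l => proj1_sig (Rseries_CV_comp (F l) Sm (Hb l) (exist _ 2 HSm))).
  assert (HB : forall l, infinite_sum (F l) (B l)) by (intro l; exact (proj2_sig (Rseries_CV_comp (F l) Sm (Hb l) (exist _ 2 HSm)))).
  assert (Hcont : forall l0, continuity_pt B l0).
  { intro l0. apply (series_cont F Sm 2 B l0 Hb HSm); auto.
    intro x. apply (continuity_pt_mult (fun l => pw (P x) (clamp l)) (fun l => pw (Q x) (1 - clamp l))).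
    - apply pw_cont, clamp_cont.
    - apply pw_cont, onem_clamp_cont. }
  destruct (continuity_ab_min B 0 1) as [lm [Hmin Hlm]]; [lra| intros; apply Hcont|].
  assert (Hbs : forall lam, 0 <= lam <= 1 -> is_bsum P Q lam (B lam)).
  { intros lam Hl. unfold is_bsum. pose proof (HB lam) as H. unfold F in H.
    rewrite (clamp_id lam Hl) in H. exact H. }
  exists (neglog (B lm)). split.
  { exists (B lm). split; [exists lm; auto|]. split; [|reflexivity].
    intros lam b Hl Hb'. rewrite (uniqueness_sum _ _ _ Hb' (Hbs lam Hl)). auto. }
  pose (BC := B (1/2)).
  assert (HBC : infinite_sum (fun x => sqrt (P x) * sqrt (Q x)) BC).
  { apply (isum_ext (F (1/2))); [|apply HB]. intro x. unfold F.
    rewrite clamp_id by lra. replace (1 - 1/2) with (1/2) by field.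
    rewrite !pw_half; auto. }
  assert (HBC0 : 0 <= BC).
  { apply (isum_nonneg _ _ (fun x => Rmult_le_pos _ _ (sqrt_positivity _ (HP0 x)) (sqrt_positivity _ (HQ0 x))) HBC). }
  assert (HBC1 : BC <= 1).
  { pose proof (isum_lin Sm Sm 2 2 (1/2) 0 HSm HSm).
    replace 1 with (1/2*2+0*2) by field. refine (isum_le _ _ _ _ _ HBC H).
    intro x. pose proof (sqrt_sqrt _ (HP0 x)). pose proof (sqrt_sqrt _ (HQ0 x)). unfold Sm.
    set (a := sqrt (P x)) in *. set (b := sqrt (Q x)) in *. rewrite <- H0, <- H1. assert (0 <= (a-b)*(a-b)) by apply Rle_0_sqr. lra. }
  assert (Ht0 : 0 <= t) by (apply (isum_nonneg _ _ (fun x => Rabs_pos _) Ht)).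
  assert (Hdb : d^2 <= 1 - BC^2).
  { apply tv_alg; [lra|lra|]. intros tt Htt.
    pose proof (isum_lin Sm _ 2 BC ((tt + /tt)/2) (/tt - tt) HSm HBC).
    assert (t <= (tt + / tt) / 2 * 2 + (/ tt - tt) * BC).
    { refine (isum_le _ _ _ _ _ Ht H). intro x. apply key_ineq; auto. }
    replace (tt * (1 - BC) + (1 + BC) / tt) with ((tt + / tt) / 2 * 2 + (/ tt - tt) * BC) by (field; lra).
    lra. }
  assert (Hm0 : 0 <= B lm) by (apply (isum_nonneg (F lm)); [intro x; apply Hb| apply HB]).
  assert (HmBC : B lm <= BC) by (apply Hmin; lra).
  unfold tv_bound, neglog. destruct (Rle_dec (B lm) 0) as [Hle|Hgt].
  { destruct (Rle_dec (1 - d^2) 0); simpl; exact I. }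
  apply Rnot_le_lt in Hgt. clearbody B. set (m := B lm) in *. clearbody m.
  assert (0 < BC*BC) by (apply Rmult_lt_0_compat; lra).
  destruct (Rle_dec (1 - d^2) 0) as [Hle2|Hgt2].
  { exfalso. simpl in *. lra. }
  apply Rnot_le_lt in Hgt2. simpl.
  assert (Hmm : m*m <= 1 - d^2) by nra.
  assert (Hln : ln (m*m) <= ln (1 - d^2)).
  { destruct (Req_dec (m*m) (1-d^2)) as [Heq|Hne]; [rewrite Heq; lra|]. left. apply ln_increasing; [apply Rmult_lt_0_compat; lra|lra]. }
  rewrite ln_mult in Hln by lra. replace (d*(d*1)) with (d^2) by ring. lra.
Qed.

Lemma isum2 f : (forall n, (2 <= n)%nat -> f n = 0) -> infinite_sum f (f 0%nat + f 1%nat).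
Proof.
  intros H. assert (Hs : forall n, (1 <= n)%nat -> sum_f_R0 f n = f 0%nat + f 1%nat).
  { intros n Hn. induction n; [lia|]. destruct n; [simpl; ring|].
    simpl sum_f_R0 at 1. simpl in IHn. rewrite IHn by lia. rewrite (H (S (S n))) by lia. ring. }
  intros e He. exists 1%nat. intros n Hn. unfold R_dist. rewrite Hs by lia.
  rewrite Rminus_diag, Rabs_R0. lra.
Qed.

Lemma pw_pos p y : 0 < p -> pw p y = Rpower p y.
Proof. intros. unfold pw. destruct Rle_dec; [lra|reflexivity]. Qed.

Lemma Rpower_pos p y : 0 < Rpower p y.
Proof. unfold Rpower. apply exp_pos. Qed.

Lemma part2 : forall eps : R, 0 <= eps < 1 ->
      exists P Q : nat -> R,
        is_distr P /\ is_distr Q /\ is_tv P Q eps /\ is_chernoff P Q (tv_bound eps).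
Proof.
  intros eps He.
  pose (a := (1+eps)/2). pose (b := (1-eps)/2).
  assert (Ha : 0 < a) by (unfold a; lra). assert (Hb : 0 < b) by (unfold b; lra).
  pose (P := fun n : nat => match n with 0%nat => a | 1%nat => b | _ => 0 end).
  pose (Q := fun n : nat => match n with 0%nat => b | 1%nat => a | _ => 0 end).
  exists P, Q.
  assert (HP2 : forall n, (2 <= n)%nat -> P n = 0) by (intros [|[|n]] Hn; [lia|lia|reflexivity]).
  assert (HQ2 : forall n, (2 <= n)%nat -> Q n = 0) by (intros [|[|n]] Hn; [lia|lia|reflexivity]).
  split; [|split; [|split]].
  - split. { intros [|[|n]]; simpl; lra. }
    replace 1 with (P 0%nat + P 1%nat) by (simpl; unfold a, b; field). apply isum2; auto.
  - split. { intros [|[|n]]; simpl; lra. }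
    replace 1 with (Q 0%nat + Q 1%nat) by (simpl; unfold a, b; field). apply isum2; auto.
  - exists (2*eps). split; [|field].
    replace (2*eps) with (Rabs (P 0%nat - Q 0%nat) + Rabs (P 1%nat - Q 1%nat)).
    + apply (isum2 (fun x => Rabs (P x - Q x))). intros n Hn. rewrite HP2, HQ2 by auto.
      rewrite Rminus_diag; apply Rabs_R0.
    + simpl. unfold a, b. split_Rabs; lra.
  - set (m := 2 * (sqrt a * sqrt b)).
    assert (Hsum : forall lam, is_bsum P Q lam (Rpower a lam * Rpower b (1-lam) + Rpower b lam * Rpower a (1-lam))).
    { intro lam. unfold is_bsum. rewrite <- !pw_pos by auto.
      apply (isum2 (fun x => pw (P x) lam * pw (Q x) (1 - lam))).
      intros n Hn. rewrite HP2 by auto. unfold pw. destruct Rle_dec; [ring|lra]. }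
    assert (Hm : m = Rpower a (1/2) * Rpower b (1-1/2) + Rpower b (1/2) * Rpower a (1-1/2)).
    { replace (1 - 1/2) with (/2) by field. replace (1/2) with (/2) by field.
      rewrite !Rpower_sqrt by auto. unfold m; ring. }
    assert (Hmm : m * m = 1 - eps^2).
    { unfold m. replace (2 * (sqrt a * sqrt b) * (2 * (sqrt a * sqrt b))) with (4 * ((sqrt a * sqrt a) * (sqrt b * sqrt b))) by ring.
      rewrite !sqrt_sqrt by lra. unfold a, b. field. }
    assert (Hm0 : 0 < m).
    { unfold m. apply Rmult_lt_0_compat; [lra|]. apply Rmult_lt_0_compat; apply sqrt_lt_R0; auto. }
    exists m. split; [|split].
    + exists (1/2). split; [lra|]. rewrite Hm. apply Hsum.
    + intros lam bb Hl Hbb. rewrite (uniqueness_sum _ _ _ Hbb (Hsum lam)).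
      set (x := Rpower a lam * Rpower b (1 - lam)). set (y := Rpower b lam * Rpower a (1 - lam)).
      assert (Hx : 0 < x) by (apply Rmult_lt_0_compat; apply Rpower_pos).
      assert (Hy : 0 < y) by (apply Rmult_lt_0_compat; apply Rpower_pos).
      assert (Hxy : x * y = a * b).
      { unfold x, y. replace (Rpower a lam * Rpower b (1 - lam) * (Rpower b lam * Rpower a (1 - lam)))
          with ((Rpower a lam * Rpower a (1 - lam)) * (Rpower b lam * Rpower b (1 - lam))) by ring.
        rewrite <- !Rpower_plus. replace (lam + (1 - lam)) with 1 by ring. rewrite !Rpower_1 by auto. ring. }
      assert (Hab : m * m = 4 * (a * b)) by (rewrite Hmm; unfold a, b; field).
      clearbody x y m. destruct (Rle_dec m (x+y)) as [|Hn]; [assumption|].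
      apply Rnot_le_lt in Hn. exfalso.
      assert ((x+y)*(x+y) < m*m) by (apply Rmult_le_0_lt_compat; lra).
      assert (0 <= (x-y)*(x-y)) by apply Rle_0_sqr. lra.
    + unfold tv_bound, neglog. destruct (Rle_dec (1 - eps^2) 0); [nra|].
      destruct (Rle_dec m 0); [lra|]. simpl. f_equal.
      replace (1 - eps * (eps * 1)) with (m*m) by (rewrite Hmm; ring). rewrite ln_mult by lra. field.
Qed.

Theorem corollary1 :
  (forall (P Q : nat -> R) (d : R),
      is_distr P -> is_distr Q -> is_tv P Q d ->
      exists c, is_chernoff P Q c /\ ER_le (tv_bound d) c) /\
  (forall eps : R, 0 <= eps < 1 ->
      exists P Q : nat -> R,
        is_distr P /\ is_distr Q /\ is_tv P Q eps /\ is_chernoff P Q (tv_bound eps)).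
Proof. split; [exact part1 | exact part2]. Qed.
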